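(* Let $d\ge1$ and let $\mathcal T_d=(t_{i-j})_{0\le i,j\le d-1}$ be an invertible complex Toeplitz matrix. Choose $t_+,t_-\in\mathbb C\setminus\{0\}$ with $t_++t_-=t_0$ and arbitrary $\gamma,\delta\in\mathbb C$, and set $S_{-1}=X^{2d+1}+1$ and $$S_0=T_{\gamma,\delta}=-t_--t_{-1}X-\dots-t_{-d+1}X^{d-1}+\gamma X^d+\delta X^{d+1}+t_{d-1}X^{d+2}+\dots+t_1X^{2d}+t_+X^{2d+1}.$$ Let $(S_j)$ be the symmetric subresultants of $S_{-1},S_0$ (degree $2d+1$). Then $S_d(0)\neq0$, and if $U=\sum_{i=0}^{d-1}u_iX^i$, $V=\sum_{i=0}^{d-1}v_iX^i\in\mathbb C[X]$ are any polynomials of degree at most $d-1$ with $X^{d-1}S_d=U\,(X^{2d+1}+1)+V\,T_{\gamma,\delta}$, then $\mathcal T_d^T(v_0,\dots,v_{d-1})^T=(0,\dots,0,-S_d(0))^T$; equivalently, the first column of $\mathcal T_d^{-1}$ is $-\frac{1}{S_d(0)}(v_{d-1},v_{d-2},\dots,v_0)^T$.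
   Context: Symmetric subresultants: for $A=\sum_{i=0}^n a_iX^i$, $B=\sum_{i=0}^n b_iX^i$ with $\deg A=n\ge1$ ($B$ of formal degree $n$), put $a_i=b_i=0$ for $i<0$ or $i>n$; for $1\le j\le n$, $0\le\ell\le n-j$, $\mathrm{Sylv}_{j,\ell}$ is the $2j\times2j$ matrix whose $r$-th row ($1\le r\le j$) is $(a_{1-r},\dots,a_{j-1-r},\ a_{j-r+\ell},\ a_{n+1-r},\dots,a_{n+j-r})$ and whose $(j+r)$-th row is the same with $b$ in place of $a$; $S_{-1}=A$, $S_0=B$, $S_j=\sum_{\ell=0}^{n-j}\det(\mathrm{Sylv}_{j,\ell})X^\ell$ for $1\le j\le n$. Here $n=2d+1$. (Such $U,V$ exist by the Bezout-type relation for symmetric subresultants.) *)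

(* Defs.v *)
From HB Require Import structures.
From mathcomp Require Import all_boot all_order all_algebra.
From mathcomp Require Import complex.
From mathcomp Require Import reals.
Set Implicit Arguments. Unset Strict Implicit. Unset Printing Implicit Defensive.
Import Order.TTheory GRing.Theory Num.Theory.
Local Open Scope ring_scope.

Section SymSubres.
Variable C : nzRingType.

Definition coefz (p : {poly C}) (k : int) : C :=
  match k with Posz m => p`_m | Negz _ => 0 end.

(* Sylv_{j,l}(A,B) for formal degree n, rows/columns 0-indexed:
   row r0 < j (from A, r0 = r-1):
     column c < j-1  : a_{c - r0}
     column c = j-1  : a_{j-1-r0+l}
     column c >= j   : a_{n - r0 + (c - j)}
   rows j + r0 : same with B. *)
Definition sylv_sym (A B : {poly C}) (n j l : nat) : 'M[C]_(j + j) :=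
  \matrix_(r < j + j, c < j + j)
    let p := if (r < j)%N then A else B in
    let r0 : nat := (if (r < j)%N then (r : nat) else (r : nat) - j)%N in
    coefz p (if (c.+1 < j)%N then c%:Z - r0%:Z
             else if (c < j)%N then j%:Z - 1 - r0%:Z + l%:Z
             else n%:Z - r0%:Z + (c%:Z - j%:Z)).

Definition symsubres (A B : {poly C}) (n j : nat) : {poly C} :=
  \sum_(l < (n - j).+1) \det (sylv_sym A B n j l) *: 'X^l.

End SymSubres.

Definition toeplitz (C : nzRingType) (d : nat) (t : int -> C) : 'M[C]_d :=
  \matrix_(i < d, j < d) t (i%:Z - j%:Z).

Definition Tgd (C : nzRingType) (d : nat) (t : int -> C) (tp tm gamma delta : C)
  : {poly C} :=
  \poly_(k < (d + d).+2)
    (if k == 0%N then - tm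
     else if (k < d)%N then - t (- k%:Z)
     else if k == d then gamma
     else if k == d.+1 then delta
     else if (k <= d + d)%N then t ((d + d).+1%:Z - k%:Z)
     else tp).

(* Main.v *)
Require Import Defs.
From HB Require Import structures.
From mathcomp Require Import all_boot all_order all_algebra.
From mathcomp Require Import complex.
From mathcomp Require Import reals.
From mathcomp Require Import zify ring.
Set Implicit Arguments. Unset Strict Implicit. Unset Printing Implicit Defensive.
Import Order.TTheory GRing.Theory Num.Theory.
Local Open Scope ring_scope.

Section H1.
Variable F : fieldType.

Lemma coefz_pos (p : {poly F}) (z : int) (m : nat) : z = m%:Z -> coefz p z = p`_m.
Proof. by move->. Qed.

Lemma coefz_neg (p : {poly F}) (z : int) : (z < 0)%R -> coefz p z = 0.
Proof. by case: z. Qed.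

Lemma keyA (d : nat) (t : int -> F) tp tm g de (i k : nat) :
  (0 < d)%N -> (i < d)%N -> (k < d)%N -> tp + tm = t 0 ->
  (Tgd d t tp tm g de)`_((d+d).+1 + k - i)%N - (if (k < i)%N then 0 else (Tgd d t tp tm g de)`_(k - i)%N) = t (i%:Z - k%:Z).
Proof.
move=> d0 id kd htp; rewrite /Tgd !coef_poly.
case: (ltngtP k i) => [ki|ik|<-].
- have h1: ((d + d).+1 + k - i < (d + d).+2)%N by lia.
  rewrite h1 subr0.
  have -> : ((d + d).+1 + k - i == 0%N)%N = false by apply/eqP; lia.
  have -> : ((d + d).+1 + k - i < d)%N = false by lia.
  have -> : ((d + d).+1 + k - i == d)%N = false by apply/eqP; lia.
  have -> : ((d + d).+1 + k - i == d.+1)%N = false by apply/eqP; lia.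
  have -> : ((d + d).+1 + k - i <= d + d)%N by lia.
  by congr t; lia.
- have -> : ((d + d).+1 + k - i < (d + d).+2)%N = false by lia.
  have -> : (k - i < (d + d).+2)%N by lia.
  have -> : (k - i == 0%N)%N = false by apply/eqP; lia.
  have -> : (k - i < d)%N by lia.
  rewrite sub0r opprK; congr t; lia.
- have -> : ((d + d).+1 + k - k < (d + d).+2)%N by lia.
  have -> : ((d + d).+1 + k - k == 0%N)%N = false by apply/eqP; lia.
  have -> : ((d + d).+1 + k - k < d)%N = false by lia.
  have -> : ((d + d).+1 + k - k == d)%N = false by apply/eqP; lia.
  have -> : ((d + d).+1 + k - k == d.+1)%N = false by apply/eqP; lia.
  have -> : ((d + d).+1 + k - k <= d + d)%N = false by lia.
  by rewrite subnn /= opprK subrr htp.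
Qed.
End H1.
Section H2.
Variable F : fieldType.
Lemma coefA (n m : nat) : (('X^n + 1 : {poly F})`_m) = (m == n)%:R + (m == 0)%N%:R.
Proof. by rewrite coefD coefXn coef1. Qed.

Lemma ul (d : nat) (T : {poly F}) :
  ulsubmx (sylv_sym ('X^((d+d).+1) + 1) T (d+d).+1 d 0) = 1%:M.
Proof.
apply/matrixP => i j; rewrite !mxE /= (ltn_ord i) (ltn_ord j).
have ji := ltn_ord j; have ii := ltn_ord i.
case: (leqP i j) => hij.
  rewrite ((@coefz_pos _ _ _ (j-i)%N)); last by case: ifP => h; apply/eqP; lia.
  rewrite coefD coefXn coef1.
  have -> : (j - i == (d+d).+1)%N = false by lia.
  case: (i =P j) => [->|ne]; first by rewrite subnn eqxx add0r.
  have -> : (j - i == 0)%N = false by apply/eqP; move=> h; apply: ne; apply: val_inj => /=; lia.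
  by rewrite addr0.
rewrite coefz_neg; last by case: ifP => h; apply/eqP; lia.
case: (i =P j) => [e|//]; move: hij; by rewrite e ltnn.
Qed.

Lemma ur (d : nat) (T : {poly F}) :
  ursubmx (sylv_sym ('X^((d+d).+1) + 1) T (d+d).+1 d 0) = 1%:M.
Proof.
apply/matrixP => i j; rewrite !mxE /= (ltn_ord i).
have ji := ltn_ord j; have ii := ltn_ord i.
have -> : ((d + j).+1 < d)%N = false by lia.
have -> : (d + j < d)%N = false by lia.
rewrite (@coefz_pos _ _ _ ((d+d).+1 + j - i)%N); last by apply/eqP; lia.
rewrite coefD coefXn coef1.
have -> : ((d+d).+1 + j - i == 0)%N = false by lia.
case: (i =P j) => [->|ne]; first by rewrite addnK eqxx addr0.
have -> : ((d+d).+1 + j - i == (d+d).+1)%N = false.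
  by apply/eqP; move=> h; apply: ne; apply: val_inj => /=; lia.
by rewrite addr0.
Qed.

Lemma dl (d : nat) (A T : {poly F}) :
  dlsubmx (sylv_sym A T (d+d).+1 d 0) = \matrix_(i < d, j < d) (if (j < i)%N then 0 else T`_(j - i)).
Proof.
apply/matrixP => i j; rewrite !mxE /=.
have ji := ltn_ord j; have ii := ltn_ord i.
have -> : (d + i < d)%N = false by lia.
rewrite (ltn_ord j).
case: (ltnP j i) => hij.
  by rewrite coefz_neg //; case: ifP => h; lia.
by rewrite ((@coefz_pos _ _ _ (j-i)%N)) //; case: ifP => h; lia.
Qed.

Lemma dr (d : nat) (A T : {poly F}) :
  drsubmx (sylv_sym A T (d+d).+1 d 0) = \matrix_(i < d, j < d) T`_((d+d).+1 + j - i).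
Proof.
apply/matrixP => i j; rewrite !mxE /=.
have ji := ltn_ord j; have ii := ltn_ord i.
have -> : (d + i < d)%N = false by lia.
have -> : ((d + j).+1 < d)%N = false by lia.
have -> : (d + j < d)%N = false by lia.
by rewrite (@coefz_pos _ _ _ ((d+d).+1 + j - i)%N) //; apply/eqP; lia.
Qed.

End H2.
Lemma Sd0 (F : fieldType) (d : nat) t (tp tm g de : F) : (0 < d)%N -> tp + tm = t 0 ->
  (symsubres ('X^((d+d).+1) + 1) (Tgd d t tp tm g de) (d+d).+1 d).[0] = \det (toeplitz d t).
Proof.
move=> d0 htp.
rewrite horner_coef0 /symsubres coef_sum big_ord_recl /= coefZ coefXn eqxx mulr1.
rewrite big1 ?addr0; last by move=> l _; rewrite coefZ coefXn /= mulr0.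
rewrite -(submxK (sylv_sym _ _ _ _ _)) ul ur dl dr.
set L := \matrix_(i, j) _; set H := \matrix_(i, j) _.
have -> : block_mx 1%:M 1%:M L H = block_mx 1%:M 0 L 1%:M *m block_mx 1%:M 1%:M 0 (H - L).
  by rewrite mulmx_block !mul1mx !mul0mx !mulmx1 !addr0 addrC subrK.
rewrite det_mulmx det_lblock det_ublock !det1 !mul1r.
congr (\det _); apply/matrixP => i j; rewrite !mxE keyA //.
Qed.
Unset Implicit Arguments.
Local Open Scope complex_scope.

Theorem mainTheorem11 (R : realType) (d : nat) (t : int -> R[i])
  (tp tm gamma delta : R[i]) :
  (0 < d)%N ->
  toeplitz d t \in unitmx ->
  tp != 0 -> tm != 0 -> tp + tm = t 0 ->
  let n := (d + d).+1 in
  let Sm1 := 'X^n + 1 : {poly R[i]} in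
  let T := Tgd d t tp tm gamma delta in
  let Sd := symsubres Sm1 T n d in
  Sd.[0] != 0 /\
  (forall U V : {poly R[i]}, (size U <= d)%N -> (size V <= d)%N ->
     'X^(d.-1) * Sd = U * Sm1 + V * T ->
     (toeplitz d t)^T *m (\col_(i < d) V`_i)
       = \col_(i < d) (if i == d.-1 :> nat then - Sd.[0] else 0)
     /\ invmx (toeplitz d t) *m \col_(i < d) (if i == 0%N :> nat then 1 else 0)
       = - (Sd.[0])^-1 *: \col_(i < d) V`_(d.-1 - i)).
Proof.
move=> d0 unitT hp hm htp n Sm1 T Sd.
have nE : n = (d + d).+1 by [].
have hS0 : Sd.[0] = \det (toeplitz d t) by apply: Sd0.
have s0 : Sd.[0] != 0 by rewrite hS0 -unitfE -unitmxE.
split=> // U V hU hV hE.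
have hSd : forall m, (d.+2 <= m)%N -> Sd`_m = 0.
  move=> m hm'; rewrite /Sd /symsubres coef_sum big1 // => l _.
  rewrite coefZ coefXn.
  have -> : (m == l) = false by have := ltn_ord l; lia.
  by rewrite mulr0.
have cV : forall m, (V * T)`_m = \sum_(j < d) V`_j * (if (m < j)%N then 0 else T`_(m - j)).
  move=> m.
  have hV' : V = \sum_(j < d) V`_j *: 'X^j.
    rewrite -poly_def; apply/polyP => k; rewrite coef_poly; case: ltnP => // h.
    by rewrite nth_default //; apply: leq_trans h.
  rewrite {1}hV' big_distrl /= coef_sum; apply: eq_bigr => j _ /=.
  by rewrite -scalerAl coefZ coefXnM.
have hVT : V * T = 'X^(d.-1) * Sd - U * Sm1 by rewrite hE addrAC subrr add0r.
have P1 : forall k : 'I_d, \sum_(j < d) t (j%:Z - k%:Z) * V`_j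
    = if k == d.-1 :> nat then - Sd.[0] else 0.
  move=> k.
  have e1 : (V*T)`_(n + k) - (V*T)`_k = \sum_(j < d) t (j%:Z - k%:Z) * V`_j.
    rewrite !cV -sumrB; apply: eq_bigr => j _.
    have -> : (n + k < j)%N = false by have := ltn_ord j; lia.
    rewrite -mulrBr mulrC nE keyA //; by have := ltn_ord j; have := ltn_ord k; lia.
  rewrite -e1 hVT !coefB !coefXnM /Sm1 mulrDr mulr1 !coefD !coefMXn.
  have -> : (n + k < d.-1)%N = false by lia.
  have -> : (n + k < n)%N = false by lia.
  have -> : (k < n)%N by have := ltn_ord k; lia.
  rewrite hSd; last by have := ltn_ord k; lia.
  rewrite (nth_default _ (_ : size U <= n + k)%N); last by apply: leq_trans hU _; lia.
  rewrite horner_coef0 addKn.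
  case: eqP => hk.
    have -> : (k < d.-1)%N = false by lia.
    rewrite hk subnn; ring.
  have -> : (k < d.-1)%N by have := ltn_ord k; lia.
  ring.
have part1 : (toeplitz d t)^T *m (\col_(i < d) V`_i)
       = \col_(i < d) (if i == d.-1 :> nat then - Sd.[0] else 0).
  apply/matrixP => k z; rewrite !mxE -P1; apply: eq_bigr => j _; by rewrite !mxE.
split=> //.
set c := - (Sd.[0])^-1.
have key : toeplitz d t *m (c *: \col_(i < d) V`_(d.-1 - i))
    = \col_(i < d) (if i == 0%N :> nat then 1 else 0).
  rewrite -scalemxAr; apply/matrixP => a z; rewrite !mxE.
  rewrite (reindex_inj rev_ord_inj) /=.
  have := P1 (rev_ord a) => /= P1a.
  have -> : \sum_(j < d) toeplitz d t a (rev_ord j) * (\col_i V`_(d.-1 - i)) (rev_ord j) z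
      = \sum_(j < d) t (j%:Z - (d - a.+1)%N%:Z) * V`_j.
    apply: eq_bigr => j _; rewrite !mxE /=.
    have := ltn_ord j; have := ltn_ord a => ha hj.
    have -> : (d.-1 - (d - j.+1))%N = j by lia.
    by congr (t _ * _); apply/eqP; lia.
  rewrite P1a.
  have := ltn_ord a => ha.
  case: (a =P 0%N :> nat) => h.
    have -> : (d - a.+1 == d.-1)%N by lia.
    by rewrite /c mulrNN mulVf.
  have -> : (d - a.+1 == d.-1)%N = false by lia.
  by rewrite mulr0.
by rewrite -key mulmxA mulVmx // mul1mx.
Qed.
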